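(* In the standing setup, assume $A$ is generic and $\det f_0'(x)$ is not identically zero. Then for all $x\in\mathbb R^6$ and $\varepsilon\in\mathbb R$, $$\det(I-\varepsilon f_0'(x))=s_1(x,\varepsilon)s_2(x,\varepsilon)s_3(x,\varepsilon),$$ where $s_1=1-2\varepsilon^2(q_2+q_3)$, $s_2=1-2\varepsilon^2(q_1+q_3)$, $s_3=1-2\varepsilon^2(q_1+q_2)$.
   Context: Standing setup: $J=\begin{pmatrix}0&I_3\\-I_3&0\end{pmatrix}$ ($6\times6$). $A$ is a fixed real $6\times 6$ skew-Hamiltonian matrix ($A^{\rm T}J=JA$). $H_0$ is a homogeneous cubic polynomial on $\mathbb R^6$ with $A\nabla^2H_0(x)=\nabla^2H_0(x)A^{\rm T}$ for all $x$ ($\nabla^2$ = Hesse matrix), $f_0=J\nabla H_0$, with Jacobi matrix $f_0'$. Genericity: the characteristic polynomial of $A$ (a square of a cubic) has three pairwise distinct roots $\lambda_1,\lambda_2,\lambda_3$, each a double eigenvalue. $B_i=\alpha_iI+\beta_iA+\gamma_iA^2$ ($i=1,2,3$), where $\alpha_i+\beta_i\lambda+\gamma_i\lambda^2$ is the unique polynomial of degree $\le2$ equal to $-1$ at $\lambda_i$ and to $1$ at the other two eigenvalues. $q_i(x)=\tfrac18\operatorname{tr}(B_i^{\rm T}(f_0'(x))^2)$. *)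

(* Defs.v *)
(* Scalars live in a numeric closed field C (e.g. algC);
   "real" objects are those whose entries satisfy [\is Num.real]. *)
From HB Require Import structures.
From mathcomp Require Import all_boot all_order all_algebra.
Set Implicit Arguments. Unset Strict Implicit. Unset Printing Implicit Defensive.
Import Order.TTheory GRing.Theory Num.Theory.
Local Open Scope ring_scope.

(* J = [[0, I_3], [-I_3, 0]] as a 6x6 matrix (indices 0..5). *)
Definition Jmx (C : nzRingType) : 'M[C]_6 :=
  \matrix_(i < 6, j < 6)
    (if (i < 3)%N && (val j == val i + 3)%N then 1
     else if (3 <= i)%N && (val i == val j + 3)%N then -1 else 0).

(* A cubic form on C^6 given by coefficients c : H0(x) = sum c_ijk x_i x_j x_k
   (every homogeneous cubic arises this way). *)
Definition cubicH (C : nzRingType) (c : 'I_6 -> 'I_6 -> 'I_6 -> C) (x : 'I_6 -> C) : C :=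
  \sum_(i < 6) \sum_(j < 6) \sum_(k < 6) c i j k * x i * x j * x k.

(* Its Hesse matrix at x (formal second partial derivatives). *)
Definition hessH (C : nzRingType) (c : 'I_6 -> 'I_6 -> 'I_6 -> C) (x : 'I_6 -> C) : 'M[C]_6 :=
  \matrix_(a < 6, b < 6)
    \sum_(k < 6) (c a b k + c a k b + c b a k + c b k a + c k a b + c k b a) * x k.

(* Jacobi matrix of f0 = J grad H0 : f0'(x) = J * Hess H0(x). *)
Definition f0jac (C : nzRingType) (c : 'I_6 -> 'I_6 -> 'I_6 -> C) (x : 'I_6 -> C) : 'M[C]_6 :=
  Jmx C *m hessH c x.

Definition Bmx (C : nzRingType) (A : 'M[C]_6) (al be ga : C) : 'M[C]_6 :=
  al%:M + be *: A + ga *: (A *m A).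

Definition qfun (C : fieldType) (B : 'M[C]_6) (c : 'I_6 -> 'I_6 -> 'I_6 -> C) (x : 'I_6 -> C) : C :=
  8%:R^-1 * \tr (B^T *m (f0jac c x *m f0jac c x)).

Definition o1 : 'I_3 := @Ordinal 3 0 isT.
Definition o2 : 'I_3 := @Ordinal 3 1 isT.
Definition o3 : 'I_3 := @Ordinal 3 2 isT.

(* Main.v *)
Require Import Defs.
From HB Require Import structures.
From mathcomp Require Import all_boot all_order all_algebra.
From mathcomp Require Import perm mxred spectral ring.
Import Order.TTheory GRing.Theory Num.Theory.
Local Open Scope ring_scope.
Set Implicit Arguments. Unset Strict Implicit. Unset Printing Implicit Defensive.

Lemma Jtr (C : nzRingType) : (Jmx C)^T = - Jmx C.
Proof.
apply/matrixP => i j; rewrite !mxE.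
case: i j => [[|[|[|[|[|[|i]]]]]] Hi] // [[|[|[|[|[|[|j]]]]]] Hj] //=;
  by rewrite ?oppr0 ?opprK.
Qed.

Lemma hess_sym (C : comNzRingType) c (x : 'I_6 -> C) : (hessH c x)^T = hessH c x.
Proof.
apply/matrixP => a b; rewrite !mxE; apply: eq_bigr => k _.
by congr (_ * _); ring.
Qed.

Lemma tr_zero (F : fieldType) n (J S G : 'M[F]_n) : (2%:R : F) != 0 ->
  J^T = -J -> S^T = S -> J *m G = G^T *m J -> \tr (G *m (J *m S)^T) = 0.
Proof.
move=> h2 hJ hS hG.
have e : \tr (G *m (J *m S)^T) = \tr (J *m S *m G^T).
  by rewrite -mxtrace_tr !trmx_mul !trmxK.
rewrite e.
set X := J *m S *m G^T.
have hX : \tr X = - \tr X.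
  rewrite -[in LHS]mxtrace_tr /X !trmx_mul trmxK hS hJ mulmxN raddfN /=.
  rewrite raddfN /=; apply: f_equal.
  rewrite mulmxA mxtrace_mulC mulmxA hG -mulmxA mxtrace_mulC.
  by rewrite (mulmxA S) mxtrace_mulC.
have : 2%:R * \tr X = 0 by rewrite mulr2n mulrDl mul1r {1}hX addNr.
by move/eqP; rewrite mulf_eq0 (negbTE h2) /= => /eqP.
Qed.

Section Trig.
Variables (F : comNzRingType) (n : nat).
Implicit Types X Y : 'M[F]_n.

Lemma trigM X Y : is_trig_mx X -> is_trig_mx Y -> is_trig_mx (X *m Y).
Proof.
move=> /is_trig_mxP hX /is_trig_mxP hY; apply/is_trig_mxP => i j lij.
rewrite mxE big1 // => k _.
case: (ltnP i k) => hik; first by rewrite hX // mul0r.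
by rewrite hY ?mulr0 // (leq_ltn_trans hik lij).
Qed.

Lemma trig_diagM X Y i : is_trig_mx X -> is_trig_mx Y -> (X *m Y) i i = X i i * Y i i.
Proof.
move=> /is_trig_mxP hX /is_trig_mxP hY.
rewrite mxE (bigD1 i) //= big1 ?addr0 // => k hk.
case: (ltngtP i k) => hik; first by rewrite hX // mul0r.
  by rewrite hY ?mulr0.
by move: hk; rewrite (val_inj hik) eqxx.
Qed.

Lemma trigD X Y : is_trig_mx X -> is_trig_mx Y -> is_trig_mx (X + Y).
Proof.
move=> /is_trig_mxP hX /is_trig_mxP hY; apply/is_trig_mxP => i j lij.
by rewrite mxE hX // hY // addr0.
Qed.

Lemma trigB X Y : is_trig_mx X -> is_trig_mx Y -> is_trig_mx (X - Y).
Proof.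
move=> /is_trig_mxP hX /is_trig_mxP hY; apply/is_trig_mxP => i j lij.
by rewrite !mxE hX // hY // subr0.
Qed.

Lemma trigZ a X : is_trig_mx X -> is_trig_mx (a *: X).
Proof.
move=> /is_trig_mxP hX; apply/is_trig_mxP => i j lij.
by rewrite mxE hX // mulr0.
Qed.
End Trig.

Section Conj.
Variables (F : fieldType) (n : nat) (P : 'M[F]_n).
Hypothesis hP : P \in unitmx.
Definition cj X := P *m X *m invmx P.

Lemma cjM X Y : cj (X *m Y) = cj X *m cj Y.
Proof. by rewrite /cj !mulmxA mulmxKV. Qed.

Lemma cjD X Y : cj (X + Y) = cj X + cj Y.
Proof. by rewrite /cj mulmxDr mulmxDl. Qed.

Lemma cjB X Y : cj (X - Y) = cj X - cj Y.
Proof. by rewrite /cj mulmxBr mulmxBl. Qed.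

Lemma cjZ a X : cj (a *: X) = a *: cj X.
Proof. by rewrite /cj -scalemxAr -scalemxAl. Qed.

Lemma cjC a : cj a%:M = a%:M.
Proof. by rewrite /cj scalar_mxC -mulmxA mulmxV // mulmx1. Qed.

Lemma det_cj X : \det (cj X) = \det X.
Proof.
by rewrite /cj !det_mulmx det_inv mulrC mulrA mulVr ?mul1r // -unitmxE.
Qed.

Lemma tr_cj X : \tr (cj X) = \tr X.
Proof. by rewrite /cj mxtrace_mulC mulmxA mulVmx // mul1mx. Qed.

Lemma char_cj X : char_poly (cj X) = char_poly X.
Proof.
rewrite /char_poly /char_poly_mx /cj.
set Pp := map_mx polyC P; set Pi := map_mx polyC (invmx P).
have hPP : Pp *m Pi = 1%:M by rewrite -map_mxM mulmxV // map_mx1.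
have hPP' : Pi *m Pp = 1%:M by rewrite -map_mxM mulVmx // map_mx1.
rewrite !map_mxM -/Pp -/Pi.
transitivity (\det (Pp *m ('X%:M - map_mx polyC X) *m Pi)).
  congr (\det _).
  by rewrite mulmxBr mulmxBl scalar_mxC -mulmxA -[_ *m Pp *m Pi]mulmxA hPP mulmx1.
by rewrite !det_mulmx mulrC mulrA -det_mulmx hPP' det1 mul1r.
Qed.
End Conj.

Lemma diag_poly2 (F : comNzRingType) n (X : 'M[F]_n) a b d j : is_trig_mx X ->
  (a%:M + b *: X + d *: (X *m X)) j j = a + b * X j j + d * X j j ^+ 2.
Proof.
move=> tX; set Y := X *m X.
have hY : Y j j = X j j ^+ 2 by rewrite /Y trig_diagM // expr2.
clearbody Y; by rewrite !mxE hY eqxx mulr1n.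
Qed.

Definition i6 (k : nat) (h : (k < 6)%N) : 'I_6 := Ordinal h.

Lemma sum6 (R : fieldType) (F : 'I_6 -> R) : \sum_(j < 6) F j =
  F (@Ordinal 6 0 isT) + F (@Ordinal 6 1 isT) + F (@Ordinal 6 2 isT) +
  F (@Ordinal 6 3 isT) + F (@Ordinal 6 4 isT) + F (@Ordinal 6 5 isT).
Proof.
rewrite !big_ord_recr big_ord0 /=. rewrite GRing.add0r.
by repeat (congr (_ + _)); f_equal; apply: val_inj.
Qed.

Lemma prod6 (R : fieldType) (F : 'I_6 -> R) : \prod_(j < 6) F j =
  F (@Ordinal 6 0 isT) * F (@Ordinal 6 1 isT) * F (@Ordinal 6 2 isT) *
  F (@Ordinal 6 3 isT) * F (@Ordinal 6 4 isT) * F (@Ordinal 6 5 isT).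
Proof.
rewrite !big_ord_recr big_ord0 /= GRing.mul1r.
by repeat (congr (_ * _)); f_equal; apply: val_inj.
Qed.

Lemma prod3 (R : comNzRingType) (F : 'I_3 -> R) : \prod_(j < 3) F j =
  F o1 * F o2 * F o3.
Proof.
rewrite !big_ord_recr big_ord0 /= GRing.mul1r.
by repeat (congr (_ * _)); f_equal; apply: val_inj.
Qed.

Lemma scalar_part (C : fieldType) (l al be ga : 'I_3 -> C) (t n : 'I_6 -> C) (eps : C) :
  (2%:R : C) != 0 -> (8%:R : C) != 0 ->
  (forall i j, i != j -> l i != l j) ->
  (forall i j, al i + be i * l j + ga i * l j ^+ 2 = if i == j then -1 else 1) ->
  \prod_(j < 6) ('X - (t j)%:P) = \prod_(i < 3) ('X - (l i)%:P) ^+ 2 ->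
  (forall a b d, \sum_(j < 6) (a + b * t j + d * t j ^+ 2) * n j = 0) ->
  let q i := 8%:R^-1 * \sum_(j < 6) (al i + be i * t j + ga i * t j ^+ 2) * n j ^+ 2 in
  \prod_(j < 6) (1 - eps * n j) =
      (1 - 2%:R * eps ^+ 2 * (q o2 + q o3)) *
      (1 - 2%:R * eps ^+ 2 * (q o1 + q o3)) *
      (1 - 2%:R * eps ^+ 2 * (q o1 + q o2)).
Proof.
move=> h2 h8 hd hi hc hs q.
set s := [:: l o1; l o1; l o2; l o2; l o3; l o3].
have hperm : perm_eq s [tuple t j | j < 6].
  apply: prod_XsubC_eq.
  rewrite big_tuple.
  under [in RHS]eq_bigr => j _ do rewrite tnth_mktuple.
  rewrite hc prod3 !big_cons big_nil.
  by rewrite !expr2 !mulrA GRing.mulr1.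
case/tuple_permP: hperm => p hp.
have ht k : t (p k) = nth 0 s k.
  by rewrite hp nth_mktuple tnth_mktuple.
have hs' a b d : \sum_(j<6) (a + b * t (p j) + d * t (p j) ^+ 2) * n (p j) = 0.
  by have := hs a b d; rewrite (reindex_inj (@perm_inj _ p)).
have hq i : q i = 8%:R^-1 * \sum_(j<6) (al i + be i * t (p j) + ga i * t (p j) ^+ 2) * n (p j) ^+ 2.
  by rewrite /q (reindex_inj (@perm_inj _ p)).
rewrite !hq (reindex_inj (@perm_inj _ p)).
have t0 : t (p (@Ordinal 6 0 isT)) = l o1 by rewrite ht.
have t1 : t (p (@Ordinal 6 1 isT)) = l o1 by rewrite ht.
have t2 : t (p (@Ordinal 6 2 isT)) = l o2 by rewrite ht.
have t3 : t (p (@Ordinal 6 3 isT)) = l o2 by rewrite ht.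
have t4 : t (p (@Ordinal 6 4 isT)) = l o3 by rewrite ht.
have t5 : t (p (@Ordinal 6 5 isT)) = l o3 by rewrite ht.
rewrite !sum6 prod6 t0 t1 t2 t3 t4 t5.
set u0 := n (p (Ordinal (n:=6) (m:=0) isT)).
set u1 := n (p (Ordinal (n:=6) (m:=1) isT)).
set u2 := n (p (Ordinal (n:=6) (m:=2) isT)).
set u3 := n (p (Ordinal (n:=6) (m:=3) isT)).
set u4 := n (p (Ordinal (n:=6) (m:=4) isT)).
set u5 := n (p (Ordinal (n:=6) (m:=5) isT)).
have d12 : l o1 - l o2 != 0 by rewrite subr_eq0 hd.
have d13 : l o1 - l o3 != 0 by rewrite subr_eq0 hd.
have d23 : l o2 - l o3 != 0 by rewrite subr_eq0 hd.
have d21 : l o2 - l o1 != 0 by rewrite subr_eq0 hd.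
have d31 : l o3 - l o1 != 0 by rewrite subr_eq0 hd.
have d32 : l o3 - l o2 != 0 by rewrite subr_eq0 hd.
have c01 : u1 = - u0.
  have := hs' (l o2 * l o3) (- (l o2 + l o3)) 1.
  rewrite sum6 t0 t1 t2 t3 t4 t5 -/u0 -/u1 -/u2 -/u3 -/u4 -/u5 => H.
  have : (l o1 - l o2) * (l o1 - l o3) * (u0 + u1) = 0 by rewrite -H; ring.
  by move/eqP; rewrite !mulf_eq0 (negbTE d12) (negbTE d13) /= addr_eq0 => /eqP ->; rewrite opprK.
have c23 : u3 = - u2.
  have := hs' (l o1 * l o3) (- (l o1 + l o3)) 1.
  rewrite sum6 t0 t1 t2 t3 t4 t5 -/u0 -/u1 -/u2 -/u3 -/u4 -/u5 => H.
  have : (l o2 - l o1) * (l o2 - l o3) * (u2 + u3) = 0 by rewrite -H; ring.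
  by move/eqP; rewrite !mulf_eq0 (negbTE d21) (negbTE d23) /= addr_eq0 => /eqP ->; rewrite opprK.
have c45 : u5 = - u4.
  have := hs' (l o1 * l o2) (- (l o1 + l o2)) 1.
  rewrite sum6 t0 t1 t2 t3 t4 t5 -/u0 -/u1 -/u2 -/u3 -/u4 -/u5 => H.
  have : (l o3 - l o1) * (l o3 - l o2) * (u4 + u5) = 0 by rewrite -H; ring.
  by move/eqP; rewrite !mulf_eq0 (negbTE d31) (negbTE d32) /= addr_eq0 => /eqP ->; rewrite opprK.
have h11 := hi o1 o1; have h12 := hi o1 o2; have h13 := hi o1 o3.
have h21 := hi o2 o1; have h22 := hi o2 o2; have h23 := hi o2 o3.
have h31 := hi o3 o1; have h32 := hi o3 o2; have h33 := hi o3 o3.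
rewrite /= in h11 h12 h13 h21 h22 h23 h31 h32 h33.
rewrite h11 h12 h13 h21 h22 h23 h31 h32 h33 c01 c23 c45.
by field.
Qed.

Theorem mainTheorem16 (C : numClosedFieldType)
  (A : 'M[C]_6) (c : 'I_6 -> 'I_6 -> 'I_6 -> C)
  (lam al be ga : 'I_3 -> C)
  (* A is real and skew-Hamiltonian *)
  (hAreal : forall i j, A i j \is Num.real)
  (hskew : A^T *m Jmx C = Jmx C *m A)
  (* H0 is a real cubic form *)
  (hcreal : forall i j k, c i j k \is Num.real)
  (* A Hess H0(x) = Hess H0(x) A^T for all x in R^6 *)
  (hcomm : forall x : 'I_6 -> C, (forall i, x i \is Num.real) ->
             A *m hessH c x = hessH c x *m A^T)
  (* genericity: char poly = prod (X - lam_i)^2 with pairwise distinct lam_i *)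
  (hchar : char_poly A = \prod_(i < 3) ('X - (lam i)%:P) ^+ 2)
  (hdist : forall i j, i != j -> lam i != lam j)
  (* alpha_i + beta_i l + gamma_i l^2 is -1 at lam_i and 1 at the other eigenvalues *)
  (hinterp : forall i j, al i + be i * lam j + ga i * lam j ^+ 2 = if i == j then -1 else 1)
  (* det f0' is not identically zero on R^6 *)
  (hdet : exists x : 'I_6 -> C, (forall i, x i \is Num.real) /\ \det (f0jac c x) != 0) :
  forall (x : 'I_6 -> C) (eps : C), (forall i, x i \is Num.real) -> eps \is Num.real ->
    let q i := qfun (Bmx A (al i) (be i) (ga i)) c x in
    \det (1%:M - eps *: f0jac c x) =
      (1 - 2%:R * eps ^+ 2 * (q o2 + q o3)) *
      (1 - 2%:R * eps ^+ 2 * (q o1 + q o3)) *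
      (1 - 2%:R * eps ^+ 2 * (q o1 + q o2)).
Proof.
move=> x eps hx heps q.
set S := hessH c x.
set J := Jmx C.
set M := f0jac c x.
have hM : M = J *m S by [].
set N := M^T.
have h2 : (2%:R : C) != 0 by rewrite pnatr_eq0.
have h8 : (8%:R : C) != 0 by rewrite pnatr_eq0.
have commT : A^T *m M = M *m A^T.
  rewrite hM /S /J mulmxA hskew -[Jmx C *m A *m _]mulmxA (hcomm x hx).
  by rewrite mulmxA.
have comm : A *m N = N *m A.
  by rewrite /N -[A in LHS]trmxK -trmx_mul -commT trmx_mul trmxK.
have [P hPu /andP [tA tN]] := cotrigonalization2 comm.
have hP := unitarymx_unit hPu.
rewrite /similar_to /= !conjumx // in tA tN.
set A' := P *m A *m invmx P in tA.
set N' := P *m N *m invmx P in tN.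
have eA : cj P A = A' by [].
have eN : cj P N = N' by [].
clearbody A' N'.
have hsum : forall a b d, \sum_(j < 6) (a + b * A' j j + d * A' j j ^+ 2) * N' j j = 0.
  move=> a b d.
  set G := a%:M + b *: A + d *: (A *m A).
  have hGT : G^T = a%:M + b *: A^T + d *: (A^T *m A^T).
    by rewrite /G !linearD /= !linearZ /= tr_scalar_mx trmx_mul.
  have hJG : J *m G = G^T *m J.
    rewrite hGT /G !mulmxDr !mulmxDl -!scalemxAr -!scalemxAl.
    rewrite mul_scalar_mx scalar_mxC mul_scalar_mx mulmxA hskew.
    by rewrite -!mulmxA hskew !mulmxA hskew.
  have := tr_zero h2 (Jtr C) (hess_sym c x) hJG.
  rewrite -/S -hM -/N -(tr_cj hP) cjM // eN.
  have -> : cj P G = a%:M + b *: A' + d *: (A' *m A').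
    by rewrite /G !cjD // !cjZ // cjC // cjM // eA.
  have tG : is_trig_mx (a%:M + b *: A' + d *: (A' *m A')).
    by apply: trigD; [apply: trigD; [apply: scalar_mx_is_trig | apply: trigZ] | apply: trigZ; apply: trigM].
  rewrite /mxtrace => H; rewrite -[RHS]H; apply: eq_bigr => j _.
  by rewrite trig_diagM // diag_poly2.
have hq : forall i, q i = 8%:R^-1 * \sum_(j < 6) (al i + be i * A' j j + ga i * A' j j ^+ 2) * N' j j ^+ 2.
  move=> i; rewrite /q /qfun; congr (_ * _).
  rewrite -mxtrace_tr trmx_mul trmxK trmx_mul -/M -/N -(tr_cj hP) !cjM // eN.
  set B := Bmx A (al i) (be i) (ga i).
  have -> : cj P B = (al i)%:M + be i *: A' + ga i *: (A' *m A').
    by rewrite /B /Bmx !cjD // !cjZ // cjC // cjM // eA.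
  have tG : is_trig_mx ((al i)%:M + be i *: A' + ga i *: (A' *m A')).
    by apply: trigD; [apply: trigD; [apply: scalar_mx_is_trig | apply: trigZ] | apply: trigZ; apply: trigM].
  rewrite /mxtrace; apply: eq_bigr => j _.
  by rewrite (trig_diagM j (trigM tN tN) tG) (trig_diagM j tN tN) diag_poly2 // expr2 mulrC.
have hc : \prod_(j < 6) ('X - (A' j j)%:P) = \prod_(i < 3) ('X - (lam i)%:P) ^+ 2.
  by rewrite -hchar -(char_poly_trig tA) -eA char_cj.
have hdet' : \det (1%:M - eps *: M) = \prod_(j < 6) (1 - eps * N' j j).
  rewrite -det_tr linearB /= trmx1 linearZ /= -/N -(det_cj hP) cjB // cjZ // cjC // eN.
  rewrite det_trig; last by apply: trigB; [apply: scalar_mx_is_trig | apply: trigZ].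
  by apply: eq_bigr => j _; rewrite !mxE eqxx mulr1n.
rewrite hdet' !hq.
have := scalar_part eps h2 h8 hdist hinterp hc hsum.
by [].
Qed.
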